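(* Let $\lambda$ be a positive integer, $k\neq 0$, $\psi_0\in\mathbb{R}$, $F(\psi)=\frac{k}{\sin^2(\lambda\psi+\psi_0)}$, $G(\psi)=\cos(\lambda\psi+\psi_0)$, and $I_\lambda=\left(p_r+\frac{1}{\lambda r}\mathcal{X}_L\right)^\lambda G(\psi)$. Then the three functions $H=\frac12p_r^2+\frac{1}{r^2}L$, $L=\frac12p_\psi^2+F(\psi)$ and $I_\lambda$ are functionally independent on $(r,\psi,p_r,p_\psi)$-phase space (their differentials are linearly independent outside a closed nowhere dense set). Consequently, on the phase space with coordinates $(r,\psi,z,p_r,p_\psi,p_z)$, the five functions $$H_0=\frac12\left(p_r^2+\frac{1}{r^2}p_\psi^2+p_z^2\right)+\frac{F(\psi)}{r^2},\quad H_1=\frac12p_z^2,\quad H_2=\frac12p_\psi^2+F(\psi),$$ $$H_3=\frac12\left[(rp_z-zp_r)^2+\left(1+\frac{z^2}{r^2}\right)p_\psi^2\right]+\left(1+\frac{z^2}{r^2}\right)F(\psi),$$ and $I_\lambda$ are functionally independent, so the Hamiltonian $H_0$ is maximally superintegrable.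
   Context: $(r,\psi,z)$ are cylindrical coordinates in Euclidean 3-space with $r>0$, and $(p_r,p_\psi,p_z)$ the conjugate momenta with canonical Poisson bracket; dots denote derivatives in $\psi$. $\mathcal{X}_L=p_\psi\frac{\partial}{\partial\psi}-\dot F\frac{\partial}{\partial p_\psi}$ is the Hamiltonian vector field of $L$, viewed as a differential operator; $p_r$ and $1/(\lambda r)$ act by multiplication, and the power means applying the operator $\lambda$ times to $G$. Each of $H_0,\dots,H_3,I_\lambda$ Poisson-commutes with $H_0$. *)

(* Defs.v *)
From Stdlib Require Import Reals ClassicalEpsilon.
Open Scope R_scope.

(** Points of R^n are represented as [nat -> R]; only coordinates [0..n-1] matter. *)

(** The derivative of a real function at a point (the limit if it exists,
    chosen by Hilbert's epsilon; arbitrary otherwise). *)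
Definition Deriv (f : R -> R) (x : R) : R :=
  epsilon (inhabits 0) (fun l => derivable_pt_lim f x l).

Definition upd (x : nat -> R) (i : nat) (t : R) : nat -> R :=
  fun j => if Nat.eqb j i then t else x j.

Definition pd (i : nat) (f : (nat -> R) -> R) (x : nat -> R) : R :=
  Deriv (fun t => f (upd x i t)) (x i).

Definition has_grad (n : nat) (f : (nat -> R) -> R) (x : nat -> R) (g : nat -> R) : Prop :=
  forall i, (i < n)%nat -> derivable_pt_lim (fun t => f (upd x i t)) (x i) (g i).

Fixpoint sumR (m : nat) (f : nat -> R) : R :=
  match m with O => 0 | S k => sumR k f + f k end.

Definition lin_indep (n m : nat) (v : nat -> nat -> R) : Prop :=
  forall c : nat -> R,
    (forall i, (i < n)%nat -> sumR m (fun j => c j * v j i) = 0) ->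
    forall j, (j < m)%nat -> c j = 0.

Fixpoint distn (n : nat) (x y : nat -> R) : R :=
  match n with O => 0 | S k => Rmax (distn k x y) (Rabs (x k - y k)) end.

Definition closed_n (n : nat) (S : (nat -> R) -> Prop) : Prop :=
  forall x, (forall eps, eps > 0 -> exists y, S y /\ distn n x y < eps) -> S x.

Definition empty_interior_n (n : nat) (S : (nat -> R) -> Prop) : Prop :=
  forall x eps, eps > 0 -> exists y, distn n x y < eps /\ ~ S y.

Definition func_indep (n m : nat) (dom : (nat -> R) -> Prop)
    (f : nat -> (nat -> R) -> R) : Prop :=
  exists S : (nat -> R) -> Prop,
    closed_n n S /\ empty_interior_n n S /\
    forall x, dom x -> ~ S x ->
      exists g : nat -> nat -> R,
        (forall j, (j < m)%nat -> has_grad n (f j) x (g j)) /\ lin_indep n m g.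

Definition Fpot (lam : nat) (k psi0 : R) (psi : R) : R :=
  k / (sin (INR lam * psi + psi0)) ^ 2.

Definition Gfun (lam : nat) (psi0 : R) (psi : R) : R :=
  cos (INR lam * psi + psi0).

(** Reduced phase space R^4 with coordinates
    x 0 = r, x 1 = ψ, x 2 = p_r, x 3 = p_ψ. *)
Definition dom4 (lam : nat) (psi0 : R) (x : nat -> R) : Prop :=
  x 0%nat > 0 /\ sin (INR lam * x 1%nat + psi0) <> 0.

Definition L4 (lam : nat) (k psi0 : R) (x : nat -> R) : R :=
  / 2 * (x 3%nat) ^ 2 + Fpot lam k psi0 (x 1%nat).

Definition H4 (lam : nat) (k psi0 : R) (x : nat -> R) : R :=
  / 2 * (x 2%nat) ^ 2 + / (x 0%nat) ^ 2 * L4 lam k psi0 x.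

Definition XL (lam : nat) (k psi0 : R) (f : (nat -> R) -> R) (x : nat -> R) : R :=
  x 3%nat * pd 1 f x - Deriv (Fpot lam k psi0) (x 1%nat) * pd 3 f x.

Definition Dop (lam : nat) (k psi0 : R) (f : (nat -> R) -> R) (x : nat -> R) : R :=
  x 2%nat * f x + / (INR lam * x 0%nat) * XL lam k psi0 f x.

Definition Ilam4 (lam : nat) (k psi0 : R) : (nat -> R) -> R :=
  Nat.iter lam (Dop lam k psi0) (fun x => Gfun lam psi0 (x 1%nat)).

(** Full phase space R^6 with coordinates
    x 0 = r, x 1 = ψ, x 2 = z, x 3 = p_r, x 4 = p_ψ, x 5 = p_z. *)
Definition dom6 (lam : nat) (psi0 : R) (x : nat -> R) : Prop :=
  x 0%nat > 0 /\ sin (INR lam * x 1%nat + psi0) <> 0.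

Definition proj64 (x : nat -> R) : nat -> R :=
  fun i => match i with
           | 0%nat => x 0%nat | 1%nat => x 1%nat
           | 2%nat => x 3%nat | 3%nat => x 4%nat | _ => 0 end.

Definition H0 (lam : nat) (k psi0 : R) (x : nat -> R) : R :=
  / 2 * ((x 3%nat) ^ 2 + / (x 0%nat) ^ 2 * (x 4%nat) ^ 2 + (x 5%nat) ^ 2)
  + Fpot lam k psi0 (x 1%nat) / (x 0%nat) ^ 2.

Definition H1 (x : nat -> R) : R := / 2 * (x 5%nat) ^ 2.

Definition H2 (lam : nat) (k psi0 : R) (x : nat -> R) : R :=
  / 2 * (x 4%nat) ^ 2 + Fpot lam k psi0 (x 1%nat).

Definition H3 (lam : nat) (k psi0 : R) (x : nat -> R) : R :=
  / 2 * ((x 0%nat * x 5%nat - x 2%nat * x 3%nat) ^ 2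
         + (1 + (x 2%nat) ^ 2 / (x 0%nat) ^ 2) * (x 4%nat) ^ 2)
  + (1 + (x 2%nat) ^ 2 / (x 0%nat) ^ 2) * Fpot lam k psi0 (x 1%nat).

Definition Ilam6 (lam : nat) (k psi0 : R) (x : nat -> R) : R :=
  Ilam4 lam k psi0 (proj64 x).

Definition family4 (lam : nat) (k psi0 : R) (j : nat) : (nat -> R) -> R :=
  match j with
  | 0%nat => H4 lam k psi0
  | 1%nat => L4 lam k psi0
  | _ => Ilam4 lam k psi0
  end.

Definition family6 (lam : nat) (k psi0 : R) (j : nat) : (nat -> R) -> R :=
  match j with
  | 0%nat => H0 lam k psi0
  | 1%nat => H1
  | 2%nat => H2 lam k psi0
  | 3%nat => H3 lam k psi0
  | _ => Ilam6 lam k psi0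
  end.

(* Main.v *)
Require Import Defs.
From Stdlib Require Import Reals Lra Lia FunctionalExtensionality ClassicalEpsilon Classical.
Open Scope R_scope.

Inductive ex :=
| Cst (c : R) | Var (i : nat) | IV0 | Co | Si | ISi | Add (a b : ex) | Mul (a b : ex).

Fixpoint ev (a b : R) (e : ex) (x : nat -> R) : R :=
  match e with
  | Cst c => c
  | Var i => x i
  | IV0 => / x 0%nat
  | Co => cos (a * x 1%nat + b)
  | Si => sin (a * x 1%nat + b)
  | ISi => / sin (a * x 1%nat + b)
  | Add e1 e2 => ev a b e1 x + ev a b e2 x
  | Mul e1 e2 => ev a b e1 x * ev a b e2 x
  end.

Fixpoint dr (a : R) (i : nat) (e : ex) : ex :=
  match e with
  | Cst _ => Cst 0
  | Var j => Cst (if Nat.eqb i j then 1 else 0)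
  | IV0 => if Nat.eqb i 0 then Mul (Cst (-1)) (Mul IV0 IV0) else Cst 0
  | Co => if Nat.eqb i 1 then Mul (Cst (- a)) Si else Cst 0
  | Si => if Nat.eqb i 1 then Mul (Cst a) Co else Cst 0
  | ISi => if Nat.eqb i 1 then Mul (Cst (- a)) (Mul Co (Mul ISi ISi)) else Cst 0
  | Add e1 e2 => Add (dr a i e1) (dr a i e2)
  | Mul e1 e2 => Add (Mul (dr a i e1) e2) (Mul e1 (dr a i e2))
  end.

Definition Om (a b : R) (x : nat -> R) : Prop := x 0%nat <> 0 /\ sin (a * x 1%nat + b) <> 0.

Lemma upd_same x i : upd x i (x i) = x.
Proof. extensionality j; unfold upd; destruct (Nat.eqb j i) eqn:E; auto.
  apply Nat.eqb_eq in E; subst; auto. Qed.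

Lemma upd_eq x i t : upd x i t i = t.
Proof. unfold upd; rewrite Nat.eqb_refl; auto. Qed.

Lemma upd_neq x i j t : i <> j -> upd x i t j = x j.
Proof. intro H; unfold upd; destruct (Nat.eqb j i) eqn:E; auto.
  apply Nat.eqb_eq in E; subst; congruence. Qed.

Lemma dpl_ext f g x l : (forall t, f t = g t) -> derivable_pt_lim g x l -> derivable_pt_lim f x l.
Proof. intros H; replace f with g; auto. extensionality t; auto. Qed.

Lemma dpl_val f x l l' : derivable_pt_lim f x l -> l = l' -> derivable_pt_lim f x l'.
Proof. intros H ->; auto. Qed.

Lemma dpl_const c x : derivable_pt_lim (fun _ => c) x 0.
Proof. apply (derivable_pt_lim_const c x). Qed.

Lemma dpl_trig (a b x0 : R) (h : R -> R) (l : R) :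
  derivable_pt_lim h (a * x0 + b) l ->
  derivable_pt_lim (fun t => h (a * t + b)) x0 (l * a).
Proof.
  intros H.
  apply (derivable_pt_lim_comp (fun t => a * t + b) h x0 a).
  - apply (dpl_val _ _ (a * 1 + 0)); [|ring].
    apply (dpl_ext _ (fun t => a * id t + fct_cte b t)). { intros; reflexivity. }
    apply (derivable_pt_lim_plus (fun t => a * id t) (fct_cte b)).
    + apply (derivable_pt_lim_scal id a x0 1). apply derivable_pt_lim_id.
    + apply derivable_pt_lim_const.
  - apply H.
Qed.

Lemma deriv_correct a b e x i : Om a b x ->
  derivable_pt_lim (fun t => ev a b e (upd x i t)) (x i) (ev a b (dr a i e) x).
Proof.
  intros [H0 H1]. induction e; simpl.
  - apply dpl_const.
  - destruct (Nat.eqb i i0) eqn:E.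
    + apply Nat.eqb_eq in E; subst. apply (dpl_ext _ id). { intros; apply upd_eq. }
      apply derivable_pt_lim_id.
    + apply Nat.eqb_neq in E. apply (dpl_ext _ (fun _ => x i0)).
      { intros; apply upd_neq; auto. } apply dpl_const.
  - destruct (Nat.eqb i 0) eqn:E.
    + apply Nat.eqb_eq in E; subst.
      apply (dpl_ext _ (fct_cte 1 / id)%F).
      { intros; unfold div_fct, fct_cte, id; rewrite upd_eq; unfold Rdiv; ring. }
      eapply dpl_val. apply derivable_pt_lim_div. apply derivable_pt_lim_const.
      apply derivable_pt_lim_id. unfold id; auto.
      simpl; unfold fct_cte, id, Rsqr. field. auto.
    + apply Nat.eqb_neq in E. apply (dpl_ext _ (fun _ => / x 0%nat)).
      { intros; rewrite upd_neq; auto. } apply dpl_const.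
  - destruct (Nat.eqb i 1) eqn:E.
    + apply Nat.eqb_eq in E; subst.
      apply (dpl_ext _ (fun t => cos (a * t + b))). { intros; rewrite upd_eq; auto. }
      eapply dpl_val. apply dpl_trig. apply derivable_pt_lim_cos. simpl; ring.
    + apply Nat.eqb_neq in E. apply (dpl_ext _ (fun _ => cos (a * x 1%nat + b))).
      { intros; rewrite upd_neq; auto. } apply dpl_const.
  - destruct (Nat.eqb i 1) eqn:E.
    + apply Nat.eqb_eq in E; subst.
      apply (dpl_ext _ (fun t => sin (a * t + b))). { intros; rewrite upd_eq; auto. }
      eapply dpl_val. apply dpl_trig. apply derivable_pt_lim_sin. simpl; ring.
    + apply Nat.eqb_neq in E. apply (dpl_ext _ (fun _ => sin (a * x 1%nat + b))).
      { intros; rewrite upd_neq; auto. } apply dpl_const.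
  - destruct (Nat.eqb i 1) eqn:E.
    + apply Nat.eqb_eq in E; subst.
      apply (dpl_ext _ (fun t => (fct_cte 1 / sin)%F (a * t + b))).
      { intros; rewrite upd_eq; unfold div_fct, fct_cte; unfold Rdiv; ring. }
      eapply dpl_val. apply dpl_trig. apply derivable_pt_lim_div.
      apply derivable_pt_lim_const. apply derivable_pt_lim_sin. auto.
      unfold fct_cte, Rsqr. simpl. field. auto.
    + apply Nat.eqb_neq in E. apply (dpl_ext _ (fun _ => / sin (a * x 1%nat + b))).
      { intros; rewrite upd_neq; auto. } apply dpl_const.
  - apply (derivable_pt_lim_plus (fun t => ev a b e1 (upd x i t)) (fun t => ev a b e2 (upd x i t))); auto.
  - pose proof (derivable_pt_lim_mult (fun t => ev a b e1 (upd x i t)) (fun t => ev a b e2 (upd x i t)) _ _ _ IHe1 IHe2) as HH.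
    simpl in HH; rewrite upd_same in HH. exact HH.
Qed.

Lemma Deriv_eq f x l : derivable_pt_lim f x l -> Deriv f x = l.
Proof.
  intros H. unfold Deriv.
  pose proof (epsilon_spec (inhabits 0) (fun l => derivable_pt_lim f x l) (ex_intro _ l H)) as H2.
  eapply uniqueness_limite; eauto.
Qed.

Lemma dpl_local f g x l d : 0 < d -> (forall t, Rabs (t - x) < d -> f t = g t) ->
  derivable_pt_lim g x l -> derivable_pt_lim f x l.
Proof.
  intros Hd Hfg H eps Heps. destruct (H eps Heps) as [dl Hdl].
  assert (Hm : 0 < Rmin dl d) by (apply Rmin_pos; [apply cond_pos|auto]).
  exists (mkposreal _ Hm). intros h hn hlt. simpl in hlt.
  rewrite (Hfg (x + h)), (Hfg x).
  - apply Hdl; auto. eapply Rlt_le_trans; eauto; apply Rmin_l.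
  - replace (x - x) with 0 by ring; rewrite Rabs_R0; auto.
  - replace (x + h - x) with h by ring. eapply Rlt_le_trans; eauto; apply Rmin_r.
Qed.

Lemma cont_nz f y : continuity_pt f y -> f y <> 0 ->
  exists d, 0 < d /\ forall t, Rabs (t - y) < d -> f t <> 0.
Proof.
  intros Hc Hn. destruct (Hc (Rabs (f y))) as [d [Hd Hd2]]. { apply Rabs_pos_lt; auto. }
  exists d; split; auto. intros t Ht.
  destruct (Req_dec t y) as [->|Hty]; auto.
  assert (Hl : R_dist (f t) (f y) < Rabs (f y)).
  { apply Hd2. split; [split; [exact I| auto] | unfold R_dist; auto]. }
  unfold R_dist in Hl. intro Hz; rewrite Hz in Hl. replace (0 - f y) with (- f y) in Hl by ring.
  rewrite Rabs_Ropp in Hl; lra.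
Qed.

Lemma sin_cont a b y : continuity_pt (fun t => sin (a * t + b)) y.
Proof.
  apply derivable_continuous_pt. exists (cos (a * y + b) * a).
  apply dpl_trig. apply derivable_pt_lim_sin.
Qed.

Lemma Om_open a b x i : Om a b x ->
  exists d, 0 < d /\ forall t, Rabs (t - x i) < d -> Om a b (upd x i t).
Proof.
  intros [H0 H1]. destruct (Nat.eq_dec i 0) as [->|Hi0].
  - exists (Rabs (x 0%nat)); split. apply Rabs_pos_lt; auto.
    intros t Ht; split. rewrite upd_eq. intro Hz; subst. rewrite Rminus_0_l, Rabs_Ropp in Ht; lra.
    rewrite upd_neq; auto.
  - destruct (Nat.eq_dec i 1) as [->|Hi1].
    + destruct (cont_nz _ _ (sin_cont a b (x 1%nat)) H1) as [d [Hd Hd2]].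
      exists d; split; auto. intros t Ht; split. rewrite upd_neq; auto.
      rewrite upd_eq; apply Hd2; auto.
    + exists 1; split; [lra|]. intros t _; split; rewrite upd_neq; auto.
Qed.

Lemma grad_eval a b (f : (nat -> R) -> R) e x i :
  (forall y, Om a b y -> f y = ev a b e y) -> Om a b x ->
  derivable_pt_lim (fun t => f (upd x i t)) (x i) (ev a b (dr a i e) x).
Proof.
  intros Hf Hx. destruct (Om_open a b x i Hx) as [d [Hd Hd2]].
  apply (dpl_local _ (fun t => ev a b e (upd x i t)) _ _ d Hd).
  - intros t Ht; apply Hf; auto.
  - apply deriv_correct; auto.
Qed.

Definition equiv a b e1 e2 := forall x, Om a b x -> ev a b e1 x = ev a b e2 x.

Lemma dr_equiv a b i e1 e2 : equiv a b e1 e2 -> equiv a b (dr a i e1) (dr a i e2).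
Proof.
  intros H x Hx. eapply uniqueness_limite.
  apply (deriv_correct a b e1 x i Hx).
  apply (grad_eval a b (ev a b e1) e2 x i); auto.
Qed.

Lemma pd_eval a b (f : (nat -> R) -> R) e x i :
  (forall y, Om a b y -> f y = ev a b e y) -> Om a b x ->
  pd i f x = ev a b (dr a i e) x.
Proof. intros; unfold pd; apply Deriv_eq; apply grad_eval; auto. Qed.

Lemma dr_comm a b i j e x : ev a b (dr a i (dr a j e)) x = ev a b (dr a j (dr a i e)) x.
Proof.
  induction e; simpl.
  - ring.
  - destruct (Nat.eqb j i0), (Nat.eqb i i0); simpl; ring.
  - destruct (Nat.eqb j 0) eqn:Ej, (Nat.eqb i 0) eqn:Ei; simpl; try rewrite Ej; try rewrite Ei; simpl; ring.
  - destruct (Nat.eqb j 1) eqn:Ej, (Nat.eqb i 1) eqn:Ei; simpl; try rewrite Ej; try rewrite Ei; simpl; ring.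
  - destruct (Nat.eqb j 1) eqn:Ej, (Nat.eqb i 1) eqn:Ei; simpl; try rewrite Ej; try rewrite Ei; simpl; ring.
  - destruct (Nat.eqb j 1) eqn:Ej, (Nat.eqb i 1) eqn:Ei; simpl; try rewrite Ej; try rewrite Ei; simpl; ring.
  - rewrite IHe1, IHe2; ring.
  - rewrite IHe1, IHe2; ring.
Qed.

Definition Fe k := Mul (Mul (Cst k) ISi) ISi.
Definition Xe a k e := Add (Mul (Var 3) (dr a 1 e)) (Mul (Cst (-1)) (Mul (dr a 1 (Fe k)) (dr a 3 e))).
Definition dop a k e := Add (Mul (Var 2) e) (Mul (Cst (/ a)) (Mul IV0 (Xe a k e))).
Definition EI a k n := Nat.iter n (dop a k) Co.

Lemma Fpot_ev lam k psi0 x t : Fpot lam k psi0 t = ev (INR lam) psi0 (Fe k) (upd x 1 t).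
Proof.
  unfold Fpot, Fe; simpl; rewrite upd_eq. unfold Rdiv. rewrite Rmult_1_r, Rinv_mult. ring.
Qed.

Lemma DFpot lam k psi0 x : Om (INR lam) psi0 x ->
  Deriv (Fpot lam k psi0) (x 1%nat) = ev (INR lam) psi0 (dr (INR lam) 1 (Fe k)) x.
Proof.
  intros Hx. apply Deriv_eq.
  apply (dpl_ext _ (fun t => ev (INR lam) psi0 (Fe k) (upd x 1 t))).
  { intros; apply Fpot_ev. }
  apply deriv_correct; auto.
Qed.

Lemma Ilam_eq lam k psi0 n : forall x, Om (INR lam) psi0 x ->
  Nat.iter n (Dop lam k psi0) (fun x => Gfun lam psi0 (x 1%nat)) x = ev (INR lam) psi0 (EI (INR lam) k n) x.
Proof.
  induction n; intros x Hx.
  - reflexivity.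
  - simpl Nat.iter. unfold EI in *. simpl Nat.iter.
    set (f := Nat.iter n (Dop lam k psi0) (fun x => Gfun lam psi0 (x 1%nat))) in *.
    set (E := Nat.iter n (dop (INR lam) k) Co) in *.
    unfold Dop, XL. rewrite (pd_eval _ _ f E x 1 IHn Hx), (pd_eval _ _ f E x 3 IHn Hx), DFpot by auto.
    rewrite IHn by auto.
    unfold dop, Xe. cbn [ev]. rewrite Rinv_mult. ring.
Qed.

Lemma Xe_equiv a b k e1 e2 : equiv a b e1 e2 -> equiv a b (Xe a k e1) (Xe a k e2).
Proof.
  intros H x Hx. unfold Xe. cbn [ev].
  rewrite (dr_equiv a b 1 e1 e2 H x Hx), (dr_equiv a b 3 e1 e2 H x Hx). auto.
Qed.

Lemma dop_equiv a b k e1 e2 : equiv a b e1 e2 -> equiv a b (dop a k e1) (dop a k e2).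
Proof.
  intros H x Hx. unfold dop. cbn [ev].
  rewrite (Xe_equiv a b k e1 e2 H x Hx), (H x Hx). auto.
Qed.

Lemma D2_dop a b k e x : ev a b (dr a 2 (dop a k e)) x = ev a b e x + ev a b (dop a k (dr a 2 e)) x.
Proof.
  unfold dop, Xe, Fe. simpl. rewrite (dr_comm a b 2 1 e x), (dr_comm a b 2 3 e x). ring.
Qed.

Lemma D2_Xe a b k e x : ev a b (dr a 2 (Xe a k e)) x = ev a b (Xe a k (dr a 2 e)) x.
Proof.
  unfold Xe, Fe. simpl. rewrite (dr_comm a b 2 1 e x), (dr_comm a b 2 3 e x). ring.
Qed.

Definition D2n a m e := Nat.iter m (dr a 2) e.

Lemma D2n_dop a b k m : forall e, equiv a b (D2n a (S m) (dop a k e))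
  (Add (Mul (Cst (INR (S m))) (D2n a m e)) (dop a k (D2n a (S m) e))).
Proof.
  induction m; intros e x Hx.
  - change (D2n a 1 (dop a k e)) with (dr a 2 (dop a k e)). rewrite D2_dop.
    change (D2n a 1 e) with (dr a 2 e). change (D2n a 0 e) with e. cbn [ev]. simpl INR. ring.
  - change (D2n a (S (S m)) (dop a k e)) with (dr a 2 (D2n a (S m) (dop a k e))).
    rewrite (dr_equiv a b 2 _ _ (IHm e) x Hx).
    cbn [dr ev]. rewrite D2_dop.
    change (dr a 2 (D2n a m e)) with (D2n a (S m) e).
    change (dr a 2 (D2n a (S m) e)) with (D2n a (S (S m)) e).
    rewrite (S_INR (S m)). ring.
Qed.

Lemma dop0 a b k x : ev a b (dop a k (Cst 0)) x = 0.
Proof. unfold dop, Xe, Fe; simpl; ring. Qed.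

Lemma EI_struct a b k n :
  equiv a b (D2n a n (EI a k n)) (Mul (Cst (INR (Factorial.fact n))) Co) /\
  equiv a b (D2n a (S n) (EI a k n)) (Cst 0).
Proof.
  induction n as [|n [IH1 IH2]].
  - split; intros x Hx; simpl; ring.
  - change (EI a k (S n)) with (dop a k (EI a k n)). split.
    + intros x Hx. rewrite (D2n_dop a b k n _ x Hx). cbn [ev].
      rewrite (IH1 x Hx), (dop_equiv a b k _ _ IH2 x Hx), dop0. cbn [ev].
      change (Factorial.fact (S n)) with (S n * Factorial.fact n)%nat. rewrite mult_INR. ring.
    + intros x Hx. rewrite (D2n_dop a b k (S n) _ x Hx). cbn [ev].
      assert (H3 : equiv a b (D2n a (S (S n)) (EI a k n)) (Cst 0)).
      { intros y Hy. change (D2n a (S (S n)) (EI a k n)) with (dr a 2 (D2n a (S n) (EI a k n))).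
        rewrite (dr_equiv a b 2 _ _ IH2 y Hy). reflexivity. }
      rewrite (IH2 x Hx), (dop_equiv a b k _ _ H3 x Hx), dop0. cbn [ev]. ring.
Qed.

Lemma D2n_Xe a b k m e : equiv a b (D2n a m (Xe a k e)) (Xe a k (D2n a m e)).
Proof.
  induction m; intros x Hx.
  - reflexivity.
  - change (D2n a (S m) (Xe a k e)) with (dr a 2 (D2n a m (Xe a k e))).
    rewrite (dr_equiv a b 2 _ _ IHm x Hx), D2_Xe. reflexivity.
Qed.

Lemma key a b k n x : Om a b x ->
  ev a b (D2n a n (Xe a k (EI a k n))) x = - INR (Factorial.fact n) * a * x 3%nat * sin (a * x 1%nat + b).
Proof.
  intros Hx. rewrite (D2n_Xe a b k n _ x Hx).
  rewrite (Xe_equiv a b k _ _ (proj1 (EI_struct a b k n)) x Hx).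
  unfold Xe, Fe; simpl. ring.
Qed.

Lemma Om_upd2 a b y t : Om a b y -> Om a b (upd y 2 t).
Proof. intros [H0 H1]; split; rewrite upd_neq; auto. Qed.

Lemma upd_upd y i s t : upd (upd y i s) i t = upd y i t.
Proof. extensionality j; unfold upd; destruct (Nat.eqb j i); auto. Qed.

Lemma zero_int a b y al be : Om a b y -> forall m e,
  (forall t, al < t < be -> ev a b e (upd y 2 t) = 0) ->
  forall t, al < t < be -> ev a b (D2n a m e) (upd y 2 t) = 0.
Proof.
  intros Hy m. induction m; intros e He t Ht.
  - apply He; auto.
  - change (D2n a (S m) e) with (dr a 2 (D2n a m e)).
    set (z := upd y 2 t).
    assert (Hz : Om a b z) by (apply Om_upd2; auto).
    pose proof (deriv_correct a b (D2n a m e) z 2 Hz) as Hd.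
    assert (Hd2 : derivable_pt_lim (fun s => ev a b (D2n a m e) (upd z 2 s)) (z 2%nat) 0).
    { apply (dpl_local _ (fun _ => 0) _ _ (Rmin (t - al) (be - t))).
      - apply Rmin_pos; lra.
      - intros s Hs. unfold z; rewrite upd_upd. apply IHm; auto.
        unfold z in Hs; rewrite upd_eq in Hs.
        pose proof (Rmin_l (t - al) (be - t)); pose proof (Rmin_r (t - al) (be - t)).
        apply Rabs_def2 in Hs. lra.
      - apply dpl_const. }
    eapply uniqueness_limite; eauto.
Qed.

Lemma nonvanish a b k n y al be : Om a b y -> y 3%nat <> 0 -> a <> 0 -> al < be ->
  exists t, al < t < be /\ ev a b (Xe a k (EI a k n)) (upd y 2 t) <> 0.
Proof.
  intros Hy H3 Ha Hab. apply NNPP; intro Hn.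
  assert (Hall : forall t, al < t < be -> ev a b (Xe a k (EI a k n)) (upd y 2 t) = 0).
  { intros t Ht. apply NNPP; intro Hne. apply Hn; exists t; auto. }
  pose proof (zero_int a b y al be Hy n _ Hall ((al + be) / 2)) as Hz.
  rewrite key in Hz by (apply Om_upd2; auto).
  rewrite !upd_neq in Hz by auto.
  destruct Hy as [_ Hs].
  assert (INR (Factorial.fact n) <> 0) by apply INR_fact_neq_0.
  assert (Hm : al < (al + be) / 2 < be) by lra.
  specialize (Hz Hm).
  assert (HH: INR (Factorial.fact n) * a * y 3%nat * sin (a * y 1%nat + b) <> 0).
  { repeat apply Rmult_integral_contrapositive_currified; auto. }
  apply HH; lra.
Qed.

Lemma distn_nonneg n x y : 0 <= distn n x y.
Proof. induction n; simpl. lra. eapply Rle_trans; [apply IHn| apply Rmax_l]. Qed.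

Lemma distn_coord n x y i : (i < n)%nat -> Rabs (x i - y i) <= distn n x y.
Proof.
  induction n; intros Hi. lia.
  simpl. destruct (Nat.eq_dec i n) as [->|Hne]. apply Rmax_r.
  eapply Rle_trans; [apply IHn; lia| apply Rmax_l].
Qed.

Lemma distn_lt n x y eps : 0 < eps -> (forall i, (i < n)%nat -> Rabs (x i - y i) < eps) -> distn n x y < eps.
Proof.
  induction n; intros He H; simpl. lra.
  apply Rmax_lub_lt. apply IHn; auto. apply H; lia.
Qed.

Definition cont_at n (f : (nat -> R) -> R) x := forall eps, 0 < eps ->
  exists d, 0 < d /\ forall y, distn n x y < d -> Rabs (f y - f x) < eps.

Lemma cont_const n c x : cont_at n (fun _ => c) x.
Proof. intros eps He; exists 1; split; [lra|]; intros; rewrite Rminus_diag, Rabs_R0; auto. Qed.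

Lemma cont_add n f g x : cont_at n f x -> cont_at n g x -> cont_at n (fun y => f y + g y) x.
Proof.
  intros Hf Hg eps He. destruct (Hf (eps/2)) as [d1 [Hd1 H1]]; [lra|].
  destruct (Hg (eps/2)) as [d2 [Hd2 H2]]; [lra|].
  exists (Rmin d1 d2); split. apply Rmin_pos; auto.
  intros y Hy. pose proof (Rmin_l d1 d2); pose proof (Rmin_r d1 d2).
  specialize (H1 y ltac:(lra)); specialize (H2 y ltac:(lra)).
  replace (f y + g y - (f x + g x)) with ((f y - f x) + (g y - g x)) by ring.
  eapply Rle_lt_trans. apply Rabs_triang. lra.
Qed.

Lemma cont_mul n f g x : cont_at n f x -> cont_at n g x -> cont_at n (fun y => f y * g y) x.
Proof.
  intros Hf Hg eps He.
  set (A := Rabs (f x)); set (B := Rabs (g x)).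
  assert (HA : 0 <= A) by apply Rabs_pos. assert (HB : 0 <= B) by apply Rabs_pos.
  set (eta := Rmin 1 (eps / (1 + A + B))).
  assert (Heta : 0 < eta). { apply Rmin_pos. lra. apply Rdiv_lt_0_compat; lra. }
  assert (Heta1 : eta <= 1) by apply Rmin_l.
  assert (Heta2 : eta * (1 + A + B) <= eps).
  { pose proof (Rmin_r 1 (eps / (1 + A + B))) as Hm. fold eta in Hm.
    apply Rmult_le_compat_r with (r := 1 + A + B) in Hm; [|lra].
    unfold Rdiv in Hm. rewrite Rmult_assoc, Rinv_l, Rmult_1_r in Hm; lra. }
  destruct (Hf eta Heta) as [d1 [Hd1 H1]]. destruct (Hg eta Heta) as [d2 [Hd2 H2]].
  exists (Rmin d1 d2); split. apply Rmin_pos; auto.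
  intros y Hy. pose proof (Rmin_l d1 d2); pose proof (Rmin_r d1 d2).
  specialize (H1 y ltac:(lra)); specialize (H2 y ltac:(lra)).
  replace (f y * g y - f x * g x) with ((f y - f x) * (g y - g x) + (f x * (g y - g x) + g x * (f y - f x))) by ring.
  set (u := Rabs (f y - f x)) in *. set (v := Rabs (g y - g x)) in *.
  assert (Hu : 0 <= u) by apply Rabs_pos. assert (Hv : 0 <= v) by apply Rabs_pos.
  eapply Rle_lt_trans. apply Rabs_triang.
  eapply Rle_lt_trans. apply Rplus_le_compat_l. apply Rabs_triang.
  rewrite !Rabs_mult. fold u v A B.
  assert (u * v <= u) by nra. assert (A * v <= A * eta) by nra. assert (B * u <= B * eta) by nra.
  nra.
Qed.

Lemma cont_coord n (h : R -> R) x i f : (i < n)%nat -> (forall y, f y = h (y i)) ->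
  continuity_pt h (x i) -> cont_at n f x.
Proof.
  intros Hi Hf Hc eps He. destruct (Hc eps He) as [d [Hd H]].
  exists d; split; auto. intros y Hy. rewrite !Hf.
  destruct (Req_dec (y i) (x i)) as [E|E].
  - rewrite E, Rminus_diag, Rabs_R0; auto.
  - apply H. split. split; [exact I| intro; apply E; auto]. simpl; unfold R_dist.
    rewrite Rabs_minus_sym. eapply Rle_lt_trans; [apply (distn_coord n); auto| auto].
Qed.

Fixpoint wf (n : nat) (e : ex) : Prop :=
  match e with
  | Var i => (i < n)%nat
  | Add e1 e2 | Mul e1 e2 => wf n e1 /\ wf n e2
  | _ => True
  end.

Lemma atom_cont a b n e x c : (c < n)%nat -> Om a b x -> (forall y, ev a b e y = ev a b e (upd x c (y c))) ->
  cont_at n (ev a b e) x.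
Proof.
  intros Hc Hx H. apply (cont_coord n (fun t => ev a b e (upd x c t)) x c); auto.
  apply derivable_continuous_pt. exists (ev a b (dr a c e) x). apply deriv_correct; auto.
Qed.

Lemma ev_cont a b n e x : (2 <= n)%nat -> wf n e -> Om a b x -> cont_at n (ev a b e) x.
Proof.
  intros Hn Hw Hx. induction e; simpl in Hw.
  - apply cont_const.
  - apply (cont_coord n (fun t => t) x i); auto. apply derivable_continuous_pt, derivable_pt_id.
  - apply (atom_cont a b n IV0 x 0); [lia|auto|intros; simpl; rewrite upd_eq; auto].
  - apply (atom_cont a b n Co x 1); [lia|auto|intros; simpl; rewrite upd_eq; auto].
  - apply (atom_cont a b n Si x 1); [lia|auto|intros; simpl; rewrite upd_eq; auto].
  - apply (atom_cont a b n ISi x 1); [lia|auto|intros; simpl; rewrite upd_eq; auto].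
  - apply cont_add; tauto.
  - apply cont_mul; tauto.
Qed.

Lemma closed_bad a b n P : (2 <= n)%nat -> wf n P -> (forall x, ev a b P x <> 0 -> Om a b x) ->
  closed_n n (fun x => ev a b P x = 0).
Proof.
  intros Hn Hw HOm x Hx. apply NNPP; intro Hne.
  destruct (ev_cont a b n P x Hn Hw (HOm x Hne) (Rabs (ev a b P x))) as [d [Hd H]].
  { apply Rabs_pos_lt; auto. }
  destruct (Hx d Hd) as [y [Hy1 Hy2]].
  specialize (H y Hy2). rewrite Hy1 in H. rewrite Rminus_0_l, Rabs_Ropp in H. lra.
Qed.

Lemma wf_dr a n i e : wf n e -> wf n (dr a i e).
Proof.
  induction e; simpl; intros; auto;
  try (destruct (Nat.eqb i 0); simpl; auto; fail);
  try (destruct (Nat.eqb i 1); simpl; auto; fail); tauto.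
Qed.

Lemma wf_EI a k lam n : (4 <= n)%nat -> wf n (Xe a k (EI a k lam)).
Proof.
  intros Hn. assert (H : forall m, wf n (EI a k m)).
  { induction m; simpl. auto. unfold dop, Xe. simpl. repeat split; try lia; auto;
    apply wf_dr; auto. }
  unfold Xe; simpl. repeat split; try lia; apply wf_dr; auto.
Qed.

Lemma choose_nz v eps : 0 < eps -> exists w, Rabs (v - w) < eps /\ w <> 0.
Proof.
  intros He. destruct (Req_dec v 0) as [->|H].
  - exists (eps/2). split; [|lra]. rewrite Rminus_0_l, Rabs_Ropp, Rabs_right; lra.
  - exists v; split; auto. rewrite Rminus_diag, Rabs_R0; auto.
Qed.

Lemma choose_sin a b v eps : 0 < a -> 0 < eps -> exists w, Rabs (v - w) < eps /\ sin (a * w + b) <> 0.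
Proof.
  intros Ha He. destruct (Req_dec (sin (a * v + b)) 0) as [H|H].
  - set (d := Rmin (eps/2) (1/a)).
    assert (Hd : 0 < d). { apply Rmin_pos. lra. apply Rdiv_lt_0_compat; lra. }
    assert (Hd1 : d <= eps/2) by apply Rmin_l.
    assert (Hd2 : a * d <= 1).
    { pose proof (Rmin_r (eps/2) (1/a)) as Hm. fold d in Hm.
      apply Rmult_le_compat_l with (r := a) in Hm; [|lra].
      replace (a * (1/a)) with 1 in Hm by (field; lra). lra. }
    exists (v + d). split.
    + replace (v - (v + d)) with (- d) by ring. rewrite Rabs_Ropp, Rabs_right; lra.
    + replace (a * (v + d) + b) with ((a * v + b) + a * d) by ring.
      rewrite sin_plus, H. 
      assert (Hc : cos (a * v + b) <> 0).
      { intro Hc. pose proof (sin2_cos2 (a * v + b)) as HH. rewrite H, Hc in HH.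
        unfold Rsqr in HH. lra. }
      assert (Hs : 0 < sin (a * d)).
      { apply sin_gt_0. nra. pose proof PI2_3_2. lra. }
      intro Hz. apply Hc. nra.
  - exists v; split; auto. rewrite Rminus_diag, Rabs_R0; auto.
Qed.

Definition EL k := Add (Mul (Cst (/2)) (Mul (Var 3) (Var 3))) (Fe k).
Definition EH k := Add (Mul (Cst (/2)) (Mul (Var 2) (Var 2))) (Mul (Mul IV0 IV0) (EL k)).
Definition XI a k lam := Xe a k (EI a k lam).
Definition P4 a k lam := Mul (Var 0) (Mul Si (Mul (Var 2) (Mul (Var 3) (XI a k lam)))).

Lemma L4_ev lam k psi0 x : L4 lam k psi0 x = ev (INR lam) psi0 (EL k) x.
Proof.
  unfold L4, EL. rewrite (Fpot_ev lam k psi0 x (x 1%nat)), upd_same. simpl. ring.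
Qed.

Lemma H4_ev lam k psi0 x : H4 lam k psi0 x = ev (INR lam) psi0 (EH k) x.
Proof.
  unfold H4. rewrite L4_ev. unfold EH. cbn [ev].
  replace (x 0%nat ^ 2) with (x 0%nat * x 0%nat) by ring. rewrite Rinv_mult. ring.
Qed.

Lemma lin4 (gH gL gI : nat -> R) u Fp pr ps :
  gH 1%nat = u * Fp -> gH 2%nat = pr -> gH 3%nat = u * ps ->
  gL 1%nat = Fp -> gL 2%nat = 0 -> gL 3%nat = ps -> pr <> 0 -> ps <> 0 ->
  ps * gI 1%nat - Fp * gI 3%nat <> 0 ->
  lin_indep 4 3 (fun j => match j with 0%nat => gH | 1%nat => gL | _ => gI end).
Proof.
  intros h1 h2 h3 l1 l2 l3 Hpr Hps HX c Hc.
  pose proof (Hc 1%nat ltac:(lia)) as E1. pose proof (Hc 2%nat ltac:(lia)) as E2.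
  pose proof (Hc 3%nat ltac:(lia)) as E3. simpl in E1, E2, E3.
  rewrite h1, l1 in E1. rewrite h2, l2 in E2. rewrite h3, l3 in E3.
  assert (C2 : c 2%nat = 0).
  { assert (HH : c 2%nat * (ps * gI 1%nat - Fp * gI 3%nat) = 0).
    { replace (c 2%nat * (ps * gI 1%nat - Fp * gI 3%nat)) with
        (ps * (0 + c 0%nat * (u * Fp) + c 1%nat * Fp + c 2%nat * gI 1%nat)
         - Fp * (0 + c 0%nat * (u * ps) + c 1%nat * ps + c 2%nat * gI 3%nat)) by ring.
      rewrite E1, E3; ring. }
    apply Rmult_integral in HH; destruct HH; auto; contradiction. }
  rewrite C2 in E2. assert (C0 : c 0%nat = 0).
  { assert (c 0%nat * pr = 0) by lra. apply Rmult_integral in H; destruct H; auto; contradiction. }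
  rewrite C0, C2 in E3. assert (C1 : c 1%nat = 0).
  { assert (c 1%nat * ps = 0) by lra. apply Rmult_integral in H; destruct H; auto; contradiction. }
  intros j Hj. destruct j as [|[|[|]]]; auto; lia.
Qed.

Lemma prod_nz_l u v : u * v <> 0 -> u <> 0.
Proof. intros H Hu; apply H; rewrite Hu; ring. Qed.
Lemma prod_nz_r u v : u * v <> 0 -> v <> 0.
Proof. intros H Hu; apply H; rewrite Hu; ring. Qed.

Lemma P4_Om a b k lam x : ev a b (P4 a k lam) x <> 0 -> Om a b x.
Proof.
  unfold P4; cbn [ev]; intros H. split.
  apply prod_nz_l in H; auto.
  apply prod_nz_r, prod_nz_l in H; auto.
Qed.

Lemma dense4 a b k lam x eps : 0 < a -> 0 < eps ->
  exists y, distn 4 x y < eps /\ ev a b (P4 a k lam) y <> 0.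
Proof.
  intros Ha He.
  destruct (choose_nz (x 0%nat) eps He) as [y0 [Hy0 Ny0]].
  destruct (choose_sin a b (x 1%nat) eps Ha He) as [y1 [Hy1 Ny1]].
  destruct (choose_nz (x 3%nat) eps He) as [y3 [Hy3 Ny3]].
  set (y' := upd (upd (upd x 0 y0) 1 y1) 3 y3).
  assert (Om' : Om a b y'). { split; unfold y'; rewrite !upd_neq by lia; try rewrite upd_eq; auto. }
  assert (Hy'3 : y' 3%nat <> 0) by (unfold y'; rewrite upd_eq; auto).
  destruct (Rle_dec 0 (x 2%nat)) as [Hp|Hn].
  - destruct (nonvanish a b k lam y' (x 2%nat + eps/4) (x 2%nat + eps/2) Om' Hy'3 ltac:(lra) ltac:(lra))
      as [t [Ht Nt]].
    exists (upd y' 2 t). split.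
    + apply distn_lt; auto. intros i Hi.
      destruct i as [|[|[|[|]]]]; unfold y'; unfold upd; simpl; try lia; auto.
      rewrite Rabs_left; lra.
    + unfold P4, XI; cbn [ev]. unfold y' at 1 2 3 4; unfold upd at 1 2 3 4 5 6 7 8 9; simpl.
      repeat apply Rmult_integral_contrapositive_currified; auto; lra.
  - destruct (nonvanish a b k lam y' (x 2%nat - eps/2) (x 2%nat - eps/4) Om' Hy'3 ltac:(lra) ltac:(lra))
      as [t [Ht Nt]].
    exists (upd y' 2 t). split.
    + apply distn_lt; auto. intros i Hi.
      destruct i as [|[|[|[|]]]]; unfold y'; unfold upd; simpl; try lia; auto.
      rewrite Rabs_right; lra.
    + unfold P4, XI; cbn [ev]. unfold y' at 1 2 3 4; unfold upd at 1 2 3 4 5 6 7 8 9; simpl.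
      repeat apply Rmult_integral_contrapositive_currified; auto; lra.
Qed.

Lemma part4 lam k psi0 : (0 < lam)%nat ->
  func_indep 4 3 (dom4 lam psi0) (family4 lam k psi0).
Proof.
  intros Hl. set (a := INR lam). set (b := psi0).
  assert (Ha : 0 < a) by (apply lt_0_INR; auto).
  exists (fun x => ev a b (P4 a k lam) x = 0). split; [|split].
  - apply closed_bad. lia. unfold P4. cbn [wf]. split; [lia|split; [exact I|split; [lia|split; [lia|]]]]. apply (wf_EI a k lam 4); lia.
    apply P4_Om.
  - intros x eps He. destruct (dense4 a b k lam x eps Ha He) as [y [H1 H2]]. exists y; auto.
  - intros x Hdom HnS. pose proof (P4_Om a b k lam x HnS) as HOm.
    unfold P4 in HnS; cbn [ev] in HnS.
    pose proof (prod_nz_r _ _ (prod_nz_r _ _ HnS)) as H2.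
    pose proof (prod_nz_l _ _ H2) as Hpr.
    pose proof (prod_nz_r _ _ H2) as H3.
    pose proof (prod_nz_l _ _ H3) as Hps.
    pose proof (prod_nz_r _ _ H3) as HX.
    set (gH := fun i => ev a b (dr a i (EH k)) x).
    set (gL := fun i => ev a b (dr a i (EL k)) x).
    set (gI := fun i => ev a b (dr a i (EI a k lam)) x).
    exists (fun j => match j with 0%nat => gH | 1%nat => gL | _ => gI end). split.
    + intros j Hj i Hi. destruct j as [|[|]].
      * apply grad_eval; auto. intros; apply H4_ev.
      * apply grad_eval; auto. intros; apply L4_ev.
      * apply grad_eval; auto. intros; apply Ilam_eq; auto.
    + apply (lin4 gH gL gI (/ x 0%nat * / x 0%nat) (ev a b (dr a 1 (Fe k)) x) (x 2%nat) (x 3%nat));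
        try (unfold gH, gL, EH, EL; simpl; field; destruct HOm; auto); auto.
      unfold XI, Xe in HX; cbn [ev] in HX. unfold gI.
      intro Hz; apply HX. rewrite <- Hz; ring.
Qed.

Fixpoint ren (e : ex) : ex :=
  match e with
  | Var i => match i with 0%nat => Var 0 | 1%nat => Var 1 | 2%nat => Var 3 | 3%nat => Var 4 | _ => Cst 0 end
  | Add e1 e2 => Add (ren e1) (ren e2)
  | Mul e1 e2 => Mul (ren e1) (ren e2)
  | e => e
  end.

Lemma ren_ev a b e x : ev a b (ren e) x = ev a b e (proj64 x).
Proof. induction e; simpl; auto; try (rewrite IHe1, IHe2; auto).
  destruct i as [|[|[|[|]]]]; simpl; auto. Qed.

Lemma wf_ren e : wf 6 (ren e).
Proof. induction e; simpl; auto. destruct i as [|[|[|[|]]]]; simpl; auto; lia. Qed.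

Definition V i := Var i.
Definition EE0 k := Add (Mul (Cst (/2)) (Add (Add (Mul (V 3) (V 3)) (Mul (Mul IV0 IV0) (Mul (V 4) (V 4)))) (Mul (V 5) (V 5)))) (Mul (Fe k) (Mul IV0 IV0)).
Definition EE1 := Mul (Cst (/2)) (Mul (V 5) (V 5)).
Definition EE2 k := Add (Mul (Cst (/2)) (Mul (V 4) (V 4))) (Fe k).
Definition Dd := Add (Mul (V 0) (V 5)) (Mul (Cst (-1)) (Mul (V 2) (V 3))).
Definition Qq := Add (Cst 1) (Mul (Mul (V 2) (V 2)) (Mul IV0 IV0)).
Definition EE3 k := Add (Mul (Cst (/2)) (Add (Mul Dd Dd) (Mul Qq (Mul (V 4) (V 4))))) (Mul Qq (Fe k)).
Definition Zd a k := dr a 2 (EE3 k).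
Definition P6 a k lam := Mul (V 0) (Mul Si (Mul (V 3) (Mul (V 4) (Mul (V 5) (Mul (ren (XI a k lam)) (Zd a k)))))).

Lemma Fx lam k psi0 x : Fpot lam k psi0 (x 1%nat) = ev (INR lam) psi0 (Fe k) x.
Proof. rewrite (Fpot_ev lam k psi0 x (x 1%nat)), upd_same; auto. Qed.

Lemma H0_ev lam k psi0 x : H0 lam k psi0 x = ev (INR lam) psi0 (EE0 k) x.
Proof.
  unfold H0. rewrite Fx. unfold EE0, V; cbn [ev]. unfold Rdiv.
  replace (x 0%nat ^ 2) with (x 0%nat * x 0%nat) by ring. rewrite Rinv_mult. ring.
Qed.
Lemma H1_ev lam psi0 x : H1 x = ev (INR lam) psi0 EE1 x.
Proof. unfold H1, EE1, V; cbn [ev]. ring. Qed.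
Lemma H2_ev lam k psi0 x : H2 lam k psi0 x = ev (INR lam) psi0 (EE2 k) x.
Proof. unfold H2. rewrite Fx. unfold EE2, V; cbn [ev]. ring. Qed.
Lemma H3_ev lam k psi0 x : H3 lam k psi0 x = ev (INR lam) psi0 (EE3 k) x.
Proof.
  unfold H3. rewrite Fx. unfold EE3, Dd, Qq, V; cbn [ev].
  replace (x 0%nat ^ 2) with (x 0%nat * x 0%nat) by ring. unfold Rdiv. rewrite Rinv_mult. ring.
Qed.

Lemma Z_lin a b k y z : Om a b y ->
  ev a b (Zd a k) (upd y 2 z) =
  z * (y 3%nat * y 3%nat + / y 0%nat * / y 0%nat * (y 4%nat * y 4%nat + 2 * ev a b (Fe k) y))
  - y 3%nat * y 0%nat * y 5%nat.
Proof.
  intros H. unfold Zd, EE3, Dd, Qq, Fe, V. simpl. unfold upd; simpl. field. destruct H; split; auto.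
Qed.

Lemma lin6 (g0 g1 g2 g3 g4 : nat -> R) u Fp pr ps pz Z :
  g0 1%nat = u * Fp -> g0 2%nat = 0 -> g0 3%nat = pr -> g0 4%nat = u * ps -> g0 5%nat = pz ->
  g1 1%nat = 0 -> g1 2%nat = 0 -> g1 3%nat = 0 -> g1 4%nat = 0 -> g1 5%nat = pz ->
  g2 1%nat = Fp -> g2 2%nat = 0 -> g2 3%nat = 0 -> g2 4%nat = ps -> g2 5%nat = 0 ->
  g3 2%nat = Z ->
  g4 2%nat = 0 -> g4 5%nat = 0 ->
  Z <> 0 -> pr <> 0 -> ps <> 0 -> pz <> 0 -> ps * g4 1%nat - Fp * g4 4%nat <> 0 ->
  lin_indep 6 5 (fun j => match j with 0%nat => g0 | 1%nat => g1 | 2%nat => g2 | 3%nat => g3 | _ => g4 end).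
Proof.
  intros a1 a2 a3 a4 a5 b1 b2 b3 b4 b5 c1' c2' c3' c4' c5' d2 e2 e5 HZ Hpr Hps Hpz HX c Hc.
  pose proof (Hc 1%nat ltac:(lia)) as EE1. pose proof (Hc 2%nat ltac:(lia)) as EE2.
  pose proof (Hc 3%nat ltac:(lia)) as EE3. pose proof (Hc 4%nat ltac:(lia)) as E4.
  pose proof (Hc 5%nat ltac:(lia)) as E5. simpl in EE1, EE2, EE3, E4, E5.
  rewrite a2, b2, c2', d2, e2 in EE2.
  assert (C3 : c 3%nat = 0).
  { assert (c 3%nat * Z = 0) by lra. apply Rmult_integral in H; destruct H; auto; contradiction. }
  rewrite C3 in EE1, EE3, E4, E5.
  rewrite a1, b1, c1' in EE1. rewrite a3, b3, c3' in EE3. rewrite a4, b4, c4' in E4. rewrite a5, b5, c5', e5 in E5.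
  assert (C4 : c 4%nat = 0).
  { assert (HH : c 4%nat * (ps * g4 1%nat - Fp * g4 4%nat) = 0).
    { replace (c 4%nat * (ps * g4 1%nat - Fp * g4 4%nat)) with
        (ps * (0 + c 0%nat * (u * Fp) + c 1%nat * 0 + c 2%nat * Fp + 0 * g3 1%nat + c 4%nat * g4 1%nat)
         - Fp * (0 + c 0%nat * (u * ps) + c 1%nat * 0 + c 2%nat * ps + 0 * g3 4%nat + c 4%nat * g4 4%nat)) by ring.
      rewrite EE1, E4; ring. }
    apply Rmult_integral in HH; destruct HH; auto; contradiction. }
  rewrite C4 in EE3, E4. assert (C0 : c 0%nat = 0).
  { assert (c 0%nat * pr = 0) by lra. apply Rmult_integral in H; destruct H; auto; contradiction. }
  rewrite C0 in E4, E5. assert (C1 : c 1%nat = 0).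
  { assert (c 1%nat * pz = 0) by lra. apply Rmult_integral in H; destruct H; auto; contradiction. }
  assert (C2 : c 2%nat = 0).
  { assert (c 2%nat * ps = 0) by lra. apply Rmult_integral in H; destruct H; auto; contradiction. }
  intros j Hj. destruct j as [|[|[|[|[|]]]]]; auto; lia.
Qed.

Lemma P6_Om a b k lam x : ev a b (P6 a k lam) x <> 0 -> Om a b x.
Proof.
  unfold P6, V; cbn [ev]; intros H. split.
  apply prod_nz_l in H; auto.
  apply prod_nz_r, prod_nz_l in H; auto.
Qed.

Lemma proj_upd32 y t z : proj64 (upd (upd y 3 t) 2 z) = upd (proj64 y) 2 t.
Proof. extensionality j; destruct j as [|[|[|[|]]]]; reflexivity. Qed.

Lemma dense6 a b k lam x eps : 0 < a -> 0 < eps ->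
  exists y, distn 6 x y < eps /\ ev a b (P6 a k lam) y <> 0.
Proof.
  intros Ha He.
  destruct (choose_nz (x 0%nat) eps He) as [y0 [Hy0 Ny0]].
  destruct (choose_sin a b (x 1%nat) eps Ha He) as [y1 [Hy1 Ny1]].
  destruct (choose_nz (x 4%nat) eps He) as [y4 [Hy4 Ny4]].
  destruct (choose_nz (x 5%nat) eps He) as [y5 [Hy5 Ny5]].
  set (y' := upd (upd (upd (upd x 0 y0) 1 y1) 4 y4) 5 y5).
  assert (Om' : Om a b (proj64 y')). { split; simpl; unfold y', upd; simpl; auto. }
  assert (Hy'3 : proj64 y' 3%nat <> 0) by (simpl; unfold y', upd; simpl; auto).
  assert (Hint : exists t, Rabs (x 3%nat - t) < eps /\ t <> 0 /\
             ev a b (XI a k lam) (upd (proj64 y') 2 t) <> 0).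
  { destruct (Rle_dec 0 (x 3%nat)) as [Hp|Hn].
    - destruct (nonvanish a b k lam (proj64 y') (x 3%nat + eps/4) (x 3%nat + eps/2) Om' Hy'3 ltac:(lra) ltac:(lra))
        as [t [Ht Nt]]. exists t; split; [|split; [lra|auto]].
      rewrite Rabs_left; lra.
    - destruct (nonvanish a b k lam (proj64 y') (x 3%nat - eps/2) (x 3%nat - eps/4) Om' Hy'3 ltac:(lra) ltac:(lra))
        as [t [Ht Nt]]. exists t; split; [|split; [lra|auto]].
      rewrite Rabs_right; lra. }
  destruct Hint as [t [Ht [Nt NX]]].
  set (y'' := upd y' 3 t).
  assert (Om'' : Om a b y'') by (split; unfold y'', y', upd; simpl; auto).
  assert (Hz : exists z, Rabs (x 2%nat - z) < eps /\ ev a b (Zd a k) (upd y'' 2 z) <> 0).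
  { pose proof (fun z => Z_lin a b k y'' z Om'') as Zf.
    assert (HB : y'' 3%nat * y'' 0%nat * y'' 5%nat <> 0).
    { unfold y'', y', upd; simpl. repeat apply Rmult_integral_contrapositive_currified; auto. }
    set (A := y'' 3%nat * y'' 3%nat + / y'' 0%nat * / y'' 0%nat * (y'' 4%nat * y'' 4%nat + 2 * ev a b (Fe k) y'')) in *.
    set (B := y'' 3%nat * y'' 0%nat * y'' 5%nat) in *.
    destruct (Req_dec (x 2%nat * A - B) 0) as [E|E].
    - exists (x 2%nat + eps/2). split.
      + replace (x 2%nat - (x 2%nat + eps / 2)) with (- (eps/2)) by ring.
        rewrite Rabs_Ropp, Rabs_right; lra.
      + rewrite Zf. intro E2. assert (HA : eps/2 * A = 0) by lra.
        apply Rmult_integral in HA; destruct HA as [HA|HA]; [lra|].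
        rewrite HA in E. apply HB. lra.
    - exists (x 2%nat); split; [|rewrite Zf; auto]. rewrite Rminus_diag, Rabs_R0; auto. }
  destruct Hz as [z [Hzd Nz]].
  exists (upd y'' 2 z). split.
  - apply distn_lt; auto. intros i Hi.
    destruct i as [|[|[|[|[|[|]]]]]]; unfold y'', y'; unfold upd; simpl; try lia; auto.
  - unfold P6, V; cbn [ev]. rewrite ren_ev. unfold y''. rewrite proj_upd32.
    assert (E0 : upd (upd y' 3 t) 2 z 0%nat = y0) by (unfold y', upd; simpl; auto).
    assert (E1 : upd (upd y' 3 t) 2 z 1%nat = y1) by (unfold y', upd; simpl; auto).
    assert (E3 : upd (upd y' 3 t) 2 z 3%nat = t) by (unfold y', upd; simpl; auto).
    assert (E4 : upd (upd y' 3 t) 2 z 4%nat = y4) by (unfold y', upd; simpl; auto).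
    assert (E5 : upd (upd y' 3 t) 2 z 5%nat = y5) by (unfold y', upd; simpl; auto).
    rewrite E0, E1, E3, E4, E5.
    repeat apply Rmult_integral_contrapositive_currified; auto.
Qed.

Lemma part6 lam k psi0 : (0 < lam)%nat ->
  func_indep 6 5 (dom6 lam psi0) (family6 lam k psi0).
Proof.
  intros Hl. set (a := INR lam). set (b := psi0).
  assert (Ha : 0 < a) by (apply lt_0_INR; auto).
  exists (fun x => ev a b (P6 a k lam) x = 0). split; [|split].
  - apply closed_bad. lia. unfold P6, V. cbn [wf].
    split; [lia|split; [exact I|split; [lia|split; [lia|split; [lia|split]]]]].
    apply wf_ren. apply wf_dr. unfold EE3, Dd, Qq, Fe, V; simpl; repeat split; lia.
    apply P6_Om.
  - intros x eps He. destruct (dense6 a b k lam x eps Ha He) as [y [H1 H2]]. exists y; auto.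
  - intros x Hdom HnS. pose proof (P6_Om a b k lam x HnS) as HOm.
    unfold P6, V in HnS; cbn [ev] in HnS.
    pose proof (prod_nz_r _ _ (prod_nz_r _ _ HnS)) as H2.
    pose proof (prod_nz_l _ _ H2) as Hpr.
    pose proof (prod_nz_r _ _ H2) as H3.
    pose proof (prod_nz_l _ _ H3) as Hps.
    pose proof (prod_nz_r _ _ H3) as H4.
    pose proof (prod_nz_l _ _ H4) as Hpz.
    pose proof (prod_nz_r _ _ H4) as H5.
    pose proof (prod_nz_l _ _ H5) as HX.
    pose proof (prod_nz_r _ _ H5) as HZ.
    set (g0 := fun i => ev a b (dr a i (EE0 k)) x).
    set (g1 := fun i => ev a b (dr a i EE1) x).
    set (g2 := fun i => ev a b (dr a i (EE2 k)) x).
    set (g3 := fun i => ev a b (dr a i (EE3 k)) x).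
    set (gI := fun i => ev a b (dr a i (EI a k lam)) (proj64 x)).
    set (g4 := fun i => match i with 0%nat => gI 0%nat | 1%nat => gI 1%nat | 2%nat => 0
                 | 3%nat => gI 2%nat | 4%nat => gI 3%nat | _ => 0 end).
    assert (HOm4 : Om a b (proj64 x)) by exact HOm.
    assert (HI : forall y, Om a b y -> Ilam4 lam k psi0 y = ev a b (EI a k lam) y).
    { intros; unfold Ilam4; apply Ilam_eq; auto. }
    exists (fun j => match j with 0%nat => g0 | 1%nat => g1 | 2%nat => g2 | 3%nat => g3 | _ => g4 end). split.
    + intros j Hj i Hi. destruct j as [|[|[|[|[|]]]]]; try lia.
      * apply grad_eval; auto. intros; apply H0_ev.
      * apply grad_eval; auto. intros; apply (H1_ev lam psi0).
      * apply grad_eval; auto. intros; apply H2_ev.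
      * apply grad_eval; auto. intros; apply H3_ev.
      * simpl family6. unfold g4. destruct i as [|[|[|[|[|[|]]]]]]; try lia.
        -- apply (dpl_ext _ (fun t => Ilam4 lam k psi0 (upd (proj64 x) 0 t))).
           { intros; unfold Ilam6; f_equal; extensionality j; destruct j as [|[|[|[|]]]]; reflexivity. }
           change (x 0%nat) with (proj64 x 0%nat). apply grad_eval; auto.
        -- apply (dpl_ext _ (fun t => Ilam4 lam k psi0 (upd (proj64 x) 1 t))).
           { intros; unfold Ilam6; f_equal; extensionality j; destruct j as [|[|[|[|]]]]; reflexivity. }
           change (x 1%nat) with (proj64 x 1%nat). apply grad_eval; auto.
        -- apply (dpl_ext _ (fun t => Ilam6 lam k psi0 x)).
           { intros; unfold Ilam6; f_equal; extensionality j; destruct j as [|[|[|[|]]]]; reflexivity. }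
           apply dpl_const.
        -- apply (dpl_ext _ (fun t => Ilam4 lam k psi0 (upd (proj64 x) 2 t))).
           { intros; unfold Ilam6; f_equal; extensionality j; destruct j as [|[|[|[|]]]]; reflexivity. }
           change (x 3%nat) with (proj64 x 2%nat). apply grad_eval; auto.
        -- apply (dpl_ext _ (fun t => Ilam4 lam k psi0 (upd (proj64 x) 3 t))).
           { intros; unfold Ilam6; f_equal; extensionality j; destruct j as [|[|[|[|]]]]; reflexivity. }
           change (x 4%nat) with (proj64 x 3%nat). apply grad_eval; auto.
        -- apply (dpl_ext _ (fun t => Ilam6 lam k psi0 x)).
           { intros; unfold Ilam6; f_equal; extensionality j; destruct j as [|[|[|[|]]]]; reflexivity. }
           apply dpl_const.
    + destruct HOm as [Hr Hs].
      apply (lin6 g0 g1 g2 g3 g4 (/ x 0%nat * / x 0%nat) (ev a b (dr a 1 (Fe k)) x)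
               (x 3%nat) (x 4%nat) (x 5%nat) (ev a b (Zd a k) x));
        try (unfold g0, g1, g2, EE0, EE1, EE2, V; simpl; field; try split; auto; fail); auto.
      rewrite ren_ev in HX. unfold XI, Xe in HX; cbn [ev] in HX.
      change (ev a b (dr a 1 (Fe k)) (proj64 x)) with (ev a b (dr a 1 (Fe k)) x) in HX.
      change (proj64 x 3%nat) with (x 4%nat) in HX.
      unfold g4, gI. intro Hz; apply HX. rewrite <- Hz; ring.
Qed.

Theorem theorem2 (lam : nat) (k psi0 : R) (hlam : (0 < lam)%nat) (hk : k <> 0) :
  func_indep 4 3 (dom4 lam psi0) (family4 lam k psi0) /\
  func_indep 6 5 (dom6 lam psi0) (family6 lam k psi0).
Proof.
  split; [apply part4 | apply part6]; auto.
Qed.
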